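(* Let $p,n\ge1$ and let $u_j,v_j\in E^p$ for $j=1,\dots,n$. Put $u=\sum_{j=1}^n u_j$ and $v=\sum_{j=1}^n v_j$. Then $$D(u,v)\le\sum_{j=1}^n D(u_j,v_j).$$
   Context: A fuzzy subset of $\mathbb{R}^p$ is a function $u:\mathbb{R}^p\to[0,1]$. Its $\alpha$-cut is $[u]_\alpha=\{x\in\mathbb{R}^p: u(x)\ge\alpha\}$ for $\alpha\in(0,1]$, and $[u]_0=\overline{\{x\in\mathbb{R}^p: u(x)>0\}}$. The set $E^p$ of $p$-dimensional fuzzy numbers consists of all fuzzy subsets $u$ of $\mathbb{R}^p$ such that $[u]_\alpha$ is a nonempty compact convex subset of $\mathbb{R}^p$ for every $\alpha\in[0,1]$. For $u,v\in E^p$, $u+v$ is the element of $E^p$ determined by $[u+v]_\alpha=\{x+y: x\in[u]_\alpha,\ y\in[v]_\alpha\}$ for all $\alpha\in[0,1]$. The sendograph of $u\in E^p$ is $\mathrm{send}\,u=\{(x,\alpha)\in[u]_0\times[0,1]: u(x)\ge\alpha\}\subset\mathbb{R}^{p+1}$. For nonempty compact $U,V\subset\mathbb{R}^{p+1}$ (with the Euclidean metric $d$), the Hausdorff metric is $H(U,V)=\max\{H^*(U,V),H^*(V,U)\}$ with $H^*(U,V)=\sup_{a\in U}\inf_{b\in V}d(a,b)$. The sendograph metric on $E^p$ is $D(u,v)=H(\mathrm{send}\,u,\mathrm{send}\,v)$. *)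

(* Defs.v *)
(* Points of R^p are row vectors 'rV[R]_p,
   with the library topology (equivalent to the Euclidean one). *)
From HB Require Import structures.
From mathcomp Require Import all_boot all_order all_algebra.
From mathcomp Require Import all_classical all_reals all_analysis.
Set Implicit Arguments. Unset Strict Implicit. Unset Printing Implicit Defensive.
Import Order.TTheory GRing.Theory Num.Theory.
Import numFieldNormedType.Exports.
Local Open Scope classical_set_scope.
Local Open Scope ring_scope.

Section Fuzzy.
Variables (R : realType) (p : nat).

(* a fuzzy subset of R^p : a function R^p -> [0,1] (range condition in fuzzy_number) *)
Definition fuzzy := 'rV[R]_p -> R.

Definition acut (u : fuzzy) (a : R) : set 'rV[R]_p :=
  if 0 < a then [set x | a <= u x] else closure [set x | 0 < u x].

Definition convex_set (S : set 'rV[R]_p) : Prop :=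
  forall x y t, S x -> S y -> 0 <= t <= 1 -> S (t *: x + (1 - t) *: y).

Definition fuzzy_number (u : fuzzy) : Prop :=
  (forall x, 0 <= u x <= 1) /\
  forall a, 0 <= a <= 1 ->
    acut u a !=set0 /\ compact (acut u a) /\ convex_set (acut u a).

Definition minkowski_sum n (S : 'I_n -> set 'rV[R]_p) : set 'rV[R]_p :=
  [set z | exists xs : 'I_n -> 'rV[R]_p, (forall j, S j (xs j)) /\ z = \sum_(j < n) xs j].

Definition is_fuzzy_sum n (us : 'I_n -> fuzzy) (u : fuzzy) : Prop :=
  fuzzy_number u /\
  forall a, 0 <= a <= 1 -> acut u a = minkowski_sum (fun j => acut (us j) a).

Definition send (u : fuzzy) : set ('rV[R]_p * R) :=
  [set xa | acut u 0 xa.1 /\ 0 <= xa.2 <= 1 /\ xa.2 <= u xa.1].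

Definition edist (a b : 'rV[R]_p * R) : R :=
  Num.sqrt (\sum_(i < p) (a.1 0 i - b.1 0 i) ^+ 2 + (a.2 - b.2) ^+ 2).

Definition hausdorff_star (U V : set ('rV[R]_p * R)) : R :=
  sup [set r | exists2 a, U a & r = inf [set s | exists2 b, V b & s = edist a b]].

Definition hausdorff (U V : set ('rV[R]_p * R)) : R :=
  Num.max (hausdorff_star U V) (hausdorff_star V U).

Definition send_dist (u v : fuzzy) : R := hausdorff (send u) (send v).

End Fuzzy.

(* Main.v *)
Require Import Defs.
From HB Require Import structures.
From mathcomp Require Import all_boot all_order all_algebra.
From mathcomp Require Import all_classical all_reals all_analysis.
From mathcomp Require Import ring lra.
Import Order.TTheory GRing.Theory Num.Theory.
Import numFieldNormedType.Exports.
Local Open Scope classical_set_scope.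
Local Open Scope ring_scope.

Section Mink.
Variables (R : realType) (p : nat).
Definition NN (f : 'I_p -> R) (c : R) := Num.sqrt (\sum_(i < p) f i ^+ 2 + c ^+ 2).

Lemma NN_ge0 f c : (0:R) <= NN f c. Proof. exact: sqrtr_ge0. Qed.

Lemma sq_ge0 f c : (0:R) <= \sum_(i < p) f i ^+ 2 + c ^+ 2.
Proof. by rewrite addr_ge0 ?sqr_ge0 // sumr_ge0 // => i _; rewrite sqr_ge0. Qed.

Lemma NN_sqr f c : NN f c ^+ 2 = \sum_(i < p) f i ^+ 2 + c ^+ 2.
Proof. by rewrite sqr_sqrtr // sq_ge0. Qed.

Lemma NN0 f c g d : NN f c = 0 -> \sum_(i < p) f i * g i + c * d = 0.
Proof.
move=> /eqP; rewrite sqrtr_eq0 => h.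
have h0 : \sum_(i < p) f i ^+ 2 + c ^+ 2 = 0 by apply/eqP; rewrite eq_le h sq_ge0.
move: h0 => /eqP; rewrite paddr_eq0 ?sqr_ge0 ?sumr_ge0 // => [/andP[/eqP hs /eqP hc]|];
  last by move=> i _; rewrite sqr_ge0.
have -> : c = 0 by apply/eqP; rewrite -sqrf_eq0 hc.
rewrite mul0r addr0; apply: big1 => i _.
have /psumr_eq0P hf : \sum_(i < p) f i ^+ 2 = 0 by [].
have -> : f i = 0 by apply/eqP; rewrite -sqrf_eq0 hf // => j _; rewrite sqr_ge0.
by rewrite mul0r.
Qed.

Lemma cs f c g d : \sum_(i < p) f i * g i + c * d <= NN f c * NN g d.
Proof.
set A := NN f c; set B := NN g d.
have [A0|Apos] := eqVneq A 0; first by rewrite NN0 // A0 mul0r.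
have [B0|Bpos] := eqVneq B 0.
  rewrite (eq_bigr (fun i => g i * f i)) => [|i _]; last by rewrite mulrC.
  by rewrite (mulrC c) NN0 // B0 mulr0.
have Ap : 0 < A by rewrite lt_neqAle eq_sym Apos NN_ge0.
have Bp : 0 < B by rewrite lt_neqAle eq_sym Bpos NN_ge0.
have key : 2 * (A * B) * (\sum_(i < p) f i * g i + c * d) <=
           B ^+ 2 * (\sum_(i < p) f i ^+ 2 + c ^+ 2) + A ^+ 2 * (\sum_(i < p) g i ^+ 2 + d ^+ 2).
  rewrite mulrDr mulr_sumr !mulrDr !mulr_sumr.
  rewrite addrACA -big_split /= lerD //.
    apply: ler_sum => i _; set x := f i; set y := g i.
    have := sqr_ge0 (B * x - A * y); rewrite -subr_ge0 => h; apply: le_trans h _; rewrite le_eqVlt; apply/orP; left; apply/eqP; ring.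
  have := sqr_ge0 (B * c - A * d); rewrite -subr_ge0 => h; apply: le_trans h _; rewrite le_eqVlt; apply/orP; left; apply/eqP; ring.
rewrite -!NN_sqr -/A -/B in key.
have ABp : 0 < A * B by rewrite mulr_gt0.
rewrite -(ler_pM2l (_ : 0 < 2 * (A * B))); last by rewrite mulr_gt0.
apply: (le_trans key); rewrite le_eqVlt; apply/orP; left; apply/eqP.
by rewrite mulrC (mulrC (A ^+ 2)); ring.
Qed.

Lemma mink2 f c g d :
  NN (fun i => f i + g i) (c + d) <= NN f c + NN g d.
Proof.
have -> : NN f c + NN g d = Num.sqrt ((NN f c + NN g d)^+2).
  by rewrite sqrtr_sqr ger0_norm // addr_ge0 ?NN_ge0.
rewrite {1}/NN ler_sqrt ?sqr_ge0 //.
rewrite [in X in _ <= X]sqrrD !NN_sqr.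
have hcs := cs f c g d.
under eq_bigr do rewrite sqrrD.
rewrite !big_split /=.
rewrite sqrrD; lra.
Qed.

Lemma minkS (I : Type) (r : seq I) (F : I -> 'I_p -> R) (c : I -> R) :
  NN (fun i => \sum_(j <- r) F j i) (\sum_(j <- r) c j) <= \sum_(j <- r) NN (F j) (c j).
Proof.
elim: r => [|a r IH].
  rewrite !big_nil /NN (eq_bigr (fun _ => 0)) => [|i _]; last by rewrite big_nil expr0n.
  by rewrite big1 // expr0n /= addr0 sqrtr0.
rewrite !big_cons.
under eq_fun do rewrite big_cons.
apply: (le_trans (mink2 _ _ _ _)); exact: lerD.
Qed.

Lemma NN_mono f c d : `|c| <= `|d| -> NN f c <= NN f d.
Proof.
move=> h; apply: ler_wsqrtr; rewrite lerD2l -(real_normK (num_real c)) -(real_normK (num_real d)).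
have := normr_ge0 c; nra.
Qed.

Lemma NN_norm f c : NN f `|c| = NN f c.
Proof. by rewrite /NN real_normK // num_real. Qed.
End Mink.
Arguments NN {R p}.
Arguments mink2 {R p}.
Arguments minkS {R p I}.
Arguments NN_mono {R p}.
Arguments NN_norm {R p}.
Section F.
Variables (R : realType) (p : nat).
Implicit Types (w : fuzzy R p).

Lemma sendE w xa : fuzzy_number w ->
  send w xa <-> (0 <= xa.2 <= 1 /\ acut w xa.2 xa.1).
Proof.
move=> [hr _]; case: xa => x a; rewrite /send /acut /= ltxx; split.
  move=> [h0 [h01 hle]]; split => //; case: ifP => //.
move=> [/andP[a0 a1] h]; case: ifP h => ha h.
  split; last by rewrite a0 a1.
  by apply: subset_closure; rewrite /= (lt_le_trans ha h).
split => //; split; first by rewrite a0 a1.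
have -> : a = 0 by apply/eqP; rewrite eq_le a0 andbT leNgt ha.
by have /andP[] := hr x.
Qed.

Lemma acut_mono w b b' y : (forall x, 0 <= w x) -> 0 <= b -> b <= b' ->
  acut w b' y -> acut w b y.
Proof.
move=> hr b0 bb'; rewrite /acut; case: ifP => hb'; case: ifP => hb //.
- by move=> h; apply: le_trans h.
- by move=> h; apply: subset_closure; rewrite /= (lt_le_trans hb' h).
- by move: hb'; rewrite (lt_le_trans hb bb').
Qed.

Definition dd (a : 'rV[R]_p * R) (V : set ('rV[R]_p * R)) :=
  inf [set s | exists2 b, V b & s = Defs.edist a b].

Lemma edist_ge0 (a b : 'rV[R]_p * R) : 0 <= Defs.edist a b. Proof. exact: sqrtr_ge0. Qed.

Lemma dd_le a V b : V b -> dd a V <= Defs.edist a b.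
Proof.
move=> Vb; apply: ge_inf; last by exists b.
by exists 0 => _ [c _ ->]; apply: edist_ge0.
Qed.

Lemma dd_approx a V e : V !=set0 -> 0 < e ->
  exists2 b, V b & Defs.edist a b < dd a V + e.
Proof.
move=> [b0 Vb0] e0.
have hlt : dd a V < dd a V + e by rewrite ltrDl.
have [_ [b Vb ->] h] := @inf_lt _ [set s | exists2 b, V b & s = Defs.edist a b] (dd a V + e)
  (ex_intro _ _ (ex_intro2 _ _ b0 Vb0 erefl)) hlt.
by exists b.
Qed.

Lemma hs_ge U V a : has_ubound [set r | exists2 a, U a & r = dd a V] ->
  U a -> dd a V <= hausdorff_star U V.
Proof. by move=> hub Ua; apply: (ub_le_sup hub); exists a. Qed.

Lemma hs_le U V c : U !=set0 -> (forall a, U a -> dd a V <= c) ->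
  hausdorff_star U V <= c.
Proof.
move=> [a0 Ua0] h; apply: ge_sup; first by exists (dd a0 V), a0.
by move=> _ [a Ua ->]; apply: h.
Qed.
Lemma entry_le (x : 'rV[R]_p) i : `|x 0 i| <= `|x|.
Proof.
rewrite [X in _ <= X]/Num.norm /= mx_normrE.
exact: (le_bigmax _ _ (0, i)).
Qed.

Lemma cb (A : set 'rV[R]_p) : compact A ->
  exists M, forall x, A x -> forall i, `|x 0 i| <= M.
Proof.
move=> /compact_bounded [M0 [_ HM]].
exists (M0 + 1) => x Ax i; apply: le_trans (@entry_le x i) _.
by apply: (HM (M0 + 1)) => //; rewrite ltrDl.
Qed.

Lemma fz_ge0 w : fuzzy_number w -> forall x, 0 <= w x.
Proof. by move=> [hr _] x; have /andP[] := hr x. Qed.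

Lemma send_ne w : fuzzy_number w -> send w !=set0.
Proof.
move=> hw; have [_ /(_ 0)] := hw; rewrite lexx ler01 => /(_ isT) [[y hy] _].
by exists (y, 0); apply/(sendE _ _ hw) => /=; rewrite lexx ler01.
Qed.

Lemma send_ub u v : fuzzy_number u -> fuzzy_number v ->
  has_ubound [set r | exists2 a, send u a & r = dd a (send v)].
Proof.
move=> hu hv.
have [b0 hb0] := send_ne _ hv.
have [M hM] : exists M, forall x, acut u 0 x -> forall i, `|x 0 i| <= M.
  by apply: cb; have [_ /(_ 0)] := hu; rewrite lexx ler01 => /(_ isT) [_ []].
exists (Num.sqrt (\sum_(i < p) M ^+ 2 + 1) + NN (fun i => - b0.1 0 i) (- b0.2)).
move=> _ [a ha ->]; have [/andP[a0 a1] hx] := (sendE _ _ hu).1 ha.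
apply: le_trans (dd_le _ _ _ hb0) _.
change (NN (fun i => a.1 0 i + - b0.1 0 i) (a.2 + - b0.2) <= 
  Num.sqrt (\sum_(i < p) M ^+ 2 + 1) + NN (fun i => - b0.1 0 i) (- b0.2)).
apply: le_trans (mink2 _ _ _ _) _; rewrite lerD2r.
apply: ler_wsqrtr; apply: lerD; last by nra.
apply: ler_sum => i _.
have := hM a.1 (acut_mono _ _ _ _ (fz_ge0 _ hu) (lexx 0) a0 hx) i.
rewrite ler_norml => /andP[h1 h2]; nra.
Qed.

Lemma hmain n (hn : (0 < n)%N) (us vs : 'I_n -> fuzzy R p) (u v : fuzzy R p)
  (hus : forall j, fuzzy_number (us j)) (hvs : forall j, fuzzy_number (vs j))
  (hu : is_fuzzy_sum us u) (hv : is_fuzzy_sum vs v) :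
  hausdorff_star (send u) (send v) <=
  \sum_(j < n) hausdorff_star (send (us j)) (send (vs j)).
Proof.
have [fu hua] := hu; have [fv hva] := hv.
apply: hs_le; first exact: send_ne fu.
move=> [x a] ha; have [/andP[a0 a1] hx] := (sendE _ _ fu).1 ha; simpl in *.
have a01 : 0 <= a <= 1 by rewrite a0 a1.
rewrite (hua a a01) in hx; case: hx => xs [hxs ->].
apply/ler_addgt0Pr => e e0.
have en : 0 < e / n%:R by rewrite divr_gt0 // ltr0n.
have : forall j, exists b, send (vs j) b /\
    Defs.edist (xs j, a) b < dd (xs j, a) (send (vs j)) + e / n%:R.
  move=> j; have [b hb1 hb2] := dd_approx (xs j, a) _ _ (send_ne _ (hvs j)) en.
  by exists b.
case/choice => bs hbs.
have [k hk] : exists k, forall j, (bs k).2 <= (bs j).2.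
  case: (@arg_minP _ _ 'I_n (Ordinal hn) xpredT (fun j => (bs j).2)) => // k _ hk.
  by exists k => j; exact: hk.
have hbj : forall j, 0 <= (bs j).2 <= 1 /\ acut (vs j) (bs j).2 (bs j).1.
  by move=> j; apply/(sendE _ _ (hvs j)); case: (hbs j).
have [/andP[bk0 bk1] _] := hbj k.
have hsv : send v (\sum_(j < n) (bs j).1, (bs k).2).
  apply/(sendE _ _ fv); split => /=; first by rewrite bk0 bk1.
  rewrite (hva (bs k).2); last by rewrite bk0 bk1.
  exists (fun j => (bs j).1); split => // j.
  by apply: (acut_mono _ _ _ _ (fz_ge0 _ (hvs j)) bk0 (hk j)); case: (hbj j).
apply: le_trans (dd_le _ _ _ hsv) _.
have step1 : Defs.edist (\sum_(j < n) xs j, a) (\sum_(j < n) (bs j).1, (bs k).2)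
    <= \sum_(j < n) Defs.edist (xs j, a) (bs j).
  change (NN (fun i => (\sum_(j < n) xs j) 0 i - (\sum_(j < n) (bs j).1) 0 i)
     (a - (bs k).2) <= \sum_(j < n) Defs.edist (xs j, a) (bs j)).
  apply: le_trans (NN_mono _ (a - (bs k).2) (\sum_(j < n) `|a - (bs j).2|) _) _.
    rewrite [X in _ <= X]ger0_norm ?sumr_ge0 // (bigD1 k) //= lerDl sumr_ge0 //.
  have -> : (fun i => (\sum_(j < n) xs j) 0 i - (\sum_(j < n) (bs j).1) 0 i) =
      (fun i => \sum_(j < n) (xs j 0 i - (bs j).1 0 i)).
    by apply: funext => i; rewrite !summxE sumrB.
  apply: le_trans (minkS _ _ _) _.
  by apply: ler_sum => j _; rewrite NN_norm.
apply: le_trans step1 _.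
apply: (le_trans (_ : _ <= \sum_(j < n) (dd (xs j, a) (send (vs j)) + e / n%:R))).
  by apply: ler_sum => j _; exact: ltW (hbs j).2.
rewrite big_split /= sumr_const card_ord.
have -> : e / n%:R *+ n = e by rewrite -mulr_natr divfK // pnatr_eq0 -lt0n.
rewrite lerD2r; apply: ler_sum => j _; apply: (hs_ge _ _ _ (send_ub _ _ (hus j) (hvs j))).
by apply/(sendE _ _ (hus j)); split.
Qed.
End F.

Theorem theorem2p4 (R : realType) (p n : nat) (hp : (0 < p)%N) (hn : (0 < n)%N)
  (us vs : 'I_n -> fuzzy R p) (u v : fuzzy R p)
  (hus : forall j, fuzzy_number (us j)) (hvs : forall j, fuzzy_number (vs j))
  (hu : is_fuzzy_sum us u) (hv : is_fuzzy_sum vs v) :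
  send_dist u v <= \sum_(j < n) send_dist (us j) (vs j).
Proof.
rewrite /send_dist /hausdorff ge_max; apply/andP; split.
  apply: le_trans (@hmain R p n hn us vs u v hus hvs hu hv) _.
  by apply: ler_sum => j _; rewrite le_max lexx.
apply: le_trans (@hmain R p n hn vs us v u hvs hus hv hu) _.
by apply: ler_sum => j _; rewrite le_max lexx orbT.
Qed.
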